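(* Let $\sim_{\mathrm{NC}}$ be the equivalence relation on $S_n$ generated by $\sigma\sim_{\mathrm{NC}}\sigma s_i$ whenever $1\le i<n$ and $i\in\{\sigma(i),\sigma(i+1)\}$. Then the equivalence class of $\sim_{\mathrm{NC}}$ containing the identity is exactly $\mathrm{NC}_n$.
   Context: $s_i=(i,i+1)$ and $\sigma s_i=\sigma\circ s_i$. A set partition of $[n]$ is noncrossing if there are no distinct blocks $P,Q$ with $a,b\in P$, $c,d\in Q$, $a<c<b<d$. To a noncrossing partition associate $\sigma\in S_n$ acting on each block $\{a_1<\dots<a_p\}$ by $\sigma(a_j)=a_{j-1}$ ($j\ge2$), $\sigma(a_1)=a_p$; $\mathrm{NC}_n$ is the set of these (noncrossing) permutations. *)

(* Defs.v *)
(* [n] = {1..n} is represented by 'I_n = {0..n-1}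
   (order-preserving shift by one). *)
From mathcomp Require Import all_boot all_fingroup.
From Stdlib Require Export Relation_Operators.

Set Implicit Arguments.
Unset Strict Implicit.
Unset Printing Implicit Defensive.

Local Open Scope group_scope.

Definition adj_swap (n : nat) (i : nat) (Hi : i.+1 < n) : 'S_n :=
  tperm (Ordinal (ltnW Hi)) (Ordinal Hi).

(* sigma \circ s_i : x |-> sigma (s_i x).  In mathcomp, (s * t) x = t (s x),
   so sigma \circ s_i = s_i * sigma. *)
Definition comp_swap (n : nat) (sigma : 'S_n) (i : nat) (Hi : i.+1 < n) : 'S_n :=
  adj_swap Hi * sigma.

Definition nc_step (n : nat) (sigma tau : 'S_n) : Prop :=
  exists (i : nat) (Hi : i.+1 < n),
    (Ordinal (ltnW Hi) = sigma (Ordinal (ltnW Hi)) \/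
     Ordinal (ltnW Hi) = sigma (Ordinal Hi)) /\
    tau = comp_swap sigma Hi.

Definition nc_equiv (n : nat) : 'S_n -> 'S_n -> Prop :=
  clos_refl_sym_trans 'S_n (@nc_step n).

Definition noncrossing (n : nat) (P : {set {set 'I_n}}) : Prop :=
  forall B1 B2, B1 \in P -> B2 \in P -> B1 != B2 ->
    ~ exists a b c d : 'I_n,
        [/\ a \in B1, b \in B1, c \in B2, d \in B2 & (a < c < b) && (b < d)]%N.

(* Within a block B = {a_1 < ... < a_p} containing x:
   sigma(a_j) = a_{j-1} for j >= 2 and sigma(a_1) = a_p.
   [block_cycle B x y] says y is that image of x. *)
Definition block_cycle (n : nat) (B : {set 'I_n}) (x y : 'I_n) : Prop :=
  y \in B /\
  (if [exists z in B, (z < x)%N]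
   then (y < x)%N /\ (forall z, z \in B -> (z < x)%N -> (z <= y)%N)
   else (forall z, z \in B -> (z <= y)%N)).

Definition perm_of_partition (n : nat) (P : {set {set 'I_n}}) (sigma : 'S_n) : Prop :=
  forall x : 'I_n, block_cycle (pblock P x) x (sigma x).

Definition NC (n : nat) (sigma : 'S_n) : Prop :=
  exists P : {set {set 'I_n}},
    [/\ partition P [set: 'I_n], noncrossing P & perm_of_partition P sigma].

(* Main.v *)
Require Import Defs.
From mathcomp Require Import all_boot all_fingroup.
From mathcomp Require Import zify.

Set Implicit Arguments.
Unset Strict Implicit.
Unset Printing Implicit Defensive.

Definition cross n (X Y : {set 'I_n}) : Prop :=
  exists a b c d : 'I_n,
    [/\ a \in X, b \in X, c \in Y, d \in Y & (a < c < b) && (b < d)]%N.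

Definition goodf n (f : 'I_n -> {set 'I_n}) (s : 'S_n) : Prop :=
  [/\ forall x, x \in f x,
      forall x y, y \in f x -> f y = f x,
      forall x y, f x != f y -> ~ cross (f x) (f y)
    & forall x, block_cycle (f x) x (s x)].

Lemma NC_goodf n (s : 'S_n) : NC s <-> exists f, goodf f s.
Proof.
split.
  case=> P [/and3P[/eqP cP tP P0] ncP pP].
  have xin x : x \in pblock P x by rewrite mem_pblock cP inE.
  exists (pblock P); split => //.
  - by move=> x y yx; apply: same_pblock.
  - move=> x y ne [a [b [c [d [aX bX cY dY H]]]]].
    apply: (ncP _ _ _ _ ne); try (apply: pblock_mem; rewrite cP inE //).
    by exists a, b, c, d.
case=> f [fx fy fnc fb].
have tP : trivIset (f @: setT).
  apply/trivIsetP => A B /imsetP[x _ ->] /imsetP[y _ ->] neq.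
  rewrite -setI_eq0; apply/eqP/setP => z; rewrite !inE.
  apply/negbTE/negP => /andP[zx zy].
  by move: neq; rewrite -(fy _ _ zx) -(fy _ _ zy) eqxx.
have pb x : pblock (f @: setT) x = f x.
  by apply: def_pblock => //; apply: imset_f.
exists (f @: setT); split.
- apply/and3P; split => //.
    apply/eqP/setP => x; rewrite inE; apply/bigcupP; exists (f x) => //.
    exact: imset_f.
  by apply/imsetP => [[x _ e]]; move: (fx x); rewrite -e inE.
- move=> B1 B2 /imsetP[x _ ->] /imsetP[y _ ->] ne H.
  exact: (fnc x y ne).
- by move=> x; rewrite pb.
Qed.

Lemma ord_neq n (z a : 'I_n) : z != a -> (z : nat) != a.
Proof. by []. Qed.

Lemma bcE n (B : {set 'I_n}) x y : block_cycle B x y <->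
  y \in B /\ (((exists2 z, z \in B & (z < x)%N) /\ (y < x)%N /\
               (forall z, z \in B -> (z < x)%N -> (z <= y)%N)) \/
              ((forall z, z \in B -> (x <= z)%N) /\ (forall z, z \in B -> (z <= y)%N))).
Proof.
rewrite /block_cycle; case: ifP => [/existsP[z /andP[zB zx]] | /negbT nE].
  split; first by case=> yB [y1 y2]; split=> //; left; split=> //; exists z.
  case=> yB [[_ [y1 y2]] | [H1 H2]]; first by split.
  by have := H1 z zB; lia.
have nE' z : z \in B -> (x <= z)%N.
  by move=> zB; rewrite leqNgt; apply: contra nE => zx; apply/existsP; exists z; rewrite zB.
split; first by case=> yB H; split=> //; right; split.
by case=> yB [[[z zB zx] _] | [_ H]] //; have := nE' z zB; lia.
Qed.

Lemma cross_sub n (X Y X' Y' : {set 'I_n}) :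
  cross X Y -> X \subset X' -> Y \subset Y' -> cross X' Y'.
Proof.
move=> [a [b [c [d [aX bX cY dY H]]]]] /subsetP sX /subsetP sY.
by exists a, b, c, d; split; auto.
Qed.

Lemma cross1l n (x : 'I_n) Y : ~ cross [set x] Y.
Proof.
move=> [a [b [c [d [/set1P -> /set1P -> _ _ H]]]]]; lia.
Qed.

Lemma cross1r n (x : 'I_n) Y : ~ cross Y [set x].
Proof.
move=> [a [b [c [d [_ _ /set1P -> /set1P -> H]]]]]; lia.
Qed.

Lemma cross_merge_l n (X Y : {set 'I_n}) (a b : 'I_n) : (b : nat) = a.+1 ->
  b \in X -> a \notin Y -> b \notin Y -> cross (a |: X) Y -> cross X Y.
Proof.
move=> hab bX aY bY [u [v [c [d [uX vX cY dY H]]]]].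
have ca : (c : nat) != a by apply: ord_neq; apply: contraNneq aY => <-.
have cb : (c : nat) != b by apply: ord_neq; apply: contraNneq bY => <-.
have da : (d : nat) != a by apply: ord_neq; apply: contraNneq aY => <-.
have db : (d : nat) != b by apply: ord_neq; apply: contraNneq bY => <-.
pose g e := if e == a then b else e.
have gX e : e \in a |: X -> g e \in X.
  by rewrite /g; case/setU1P => [->|eX]; rewrite ?eqxx //; case: eqP => // ->.
have gv e : (g e : nat) = if e == a then b else e by rewrite /g; case: (e == a).
exists (g u), (g v), c, d; split; auto.
move: H; rewrite !gv; case: (u =P a) => [->|_]; case: (v =P a) => [->|_]; lia.
Qed.

Lemma cross_merge_r n (X Y : {set 'I_n}) (a b : 'I_n) : (b : nat) = a.+1 ->
  b \in X -> a \notin Y -> b \notin Y -> cross Y (a |: X) -> cross Y X.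
Proof.
move=> hab bX aY bY [c [d [u [v [cY dY uX vX H]]]]].
have ca : (c : nat) != a by apply: ord_neq; apply: contraNneq aY => <-.
have cb : (c : nat) != b by apply: ord_neq; apply: contraNneq bY => <-.
have da : (d : nat) != a by apply: ord_neq; apply: contraNneq aY => <-.
have db : (d : nat) != b by apply: ord_neq; apply: contraNneq bY => <-.
pose g e := if e == a then b else e.
have gX e : e \in a |: X -> g e \in X.
  by rewrite /g; case/setU1P => [->|eX]; rewrite ?eqxx //; case: eqP => // ->.
have gv e : (g e : nat) = if e == a then b else e by rewrite /g; case: (e == a).
exists c, d, (g u), (g v); split; auto.
move: H; rewrite !gv; case: (u =P a) => [->|_]; case: (v =P a) => [->|_]; lia.
Qed.

Section BC.
Variables (n : nat) (B : {set 'I_n}) (a b : 'I_n).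
Hypothesis hab : (b : nat) = a.+1.

Lemma bc_add_a x y : a \notin B -> b \in B -> x != a -> x != b ->
  block_cycle B x y -> block_cycle (a |: B) x y.
Proof.
move=> aB bB /ord_neq xa /ord_neq xb /bcE [yB H]; apply/bcE.
split; first by rewrite in_setU1 yB orbT.
case: H => [[[z zB zx] [yx H]] | [H1 H2]].
  left; split; first by exists z => //; rewrite in_setU1 zB orbT.
  split=> // w /setU1P[->|wB] wx; last exact: H.
  have := H b bB; lia.
right; split=> w /setU1P[->|wB]; try by [apply: H1 | apply: H2].
  by have := H1 b bB; lia.
by have := H2 b bB; lia.
Qed.

Lemma bc_merge_a y : a \notin B -> block_cycle B b y -> block_cycle (a |: B) a y.
Proof.
move=> aB /bcE [yB H]; apply/bcE.
have ya : (y : nat) != a by apply: ord_neq; apply: contraNneq aB => <-.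
split; first by rewrite in_setU1 yB orbT.
case: H => [[[z zB zb] [yb H]] | [H1 H2]].
  have za : (z : nat) != a by apply: ord_neq; apply: contraNneq aB => <-.
  left; split; first by exists z; [rewrite in_setU1 zB orbT | lia].
  split; first lia.
  move=> w /setU1P[->|wB] wa; first lia.
  apply: H => //; lia.
right; split=> w /setU1P[->|wB] //.
- by have := H1 w wB; lia.
- by have := H1 y yB; lia.
- exact: H2.
Qed.

Lemma bc_merge_b : block_cycle (a |: B) b a.
Proof.
apply/bcE; split; first by rewrite setU11.
left; split; first by exists a; [rewrite setU11 | lia].
split; first lia.
move=> z _; lia.
Qed.

Lemma bc_split_b y : a \in B -> y != a -> block_cycle B a y -> block_cycle (B :\ a) b y.
Proof.
move=> aB /ord_neq ya /bcE [yB H]; apply/bcE.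
split; first by rewrite !inE yB andbT; apply/eqP => /(congr1 val)/eqP; rewrite (negbTE ya).
case: H => [[[z zB za] [yx H]] | [H1 H2]].
  left; split.
    exists z; last lia.
    by rewrite !inE zB andbT; apply/eqP => /(congr1 val) /= e; lia.
  split; first lia.
  move=> w; rewrite !inE => /andP[/ord_neq wa wB] wb; apply: H => //; lia.
right; split=> w; rewrite !inE => /andP[/ord_neq wa wB].
  by have := H1 w wB; lia.
exact: H2.
Qed.

Lemma bc_remove x y : b \in B -> y != a -> x != a -> x != b ->
  block_cycle B x y -> block_cycle (B :\ a) x y.
Proof.
move=> bB /ord_neq ya /ord_neq xa /ord_neq xb /bcE [yB H]; apply/bcE.
have ba : b != a by apply/eqP => /(congr1 val) /=; lia.
split; first by rewrite !inE yB andbT; apply/eqP => /(congr1 val)/eqP; rewrite (negbTE ya).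
case: H => [[[z zB zx] [yx H]] | [H1 H2]].
  left; split.
    case: (z =P a) => [za|/eqP za].
      exists b; first by rewrite !inE ba.
      by move: zx; rewrite za; lia.
    by exists z; rewrite // !inE za.
  split=> // w; rewrite !inE => /andP[_ wB]; exact: H.
by right; split=> w; rewrite !inE => /andP[_ wB]; [apply: H1 | apply: H2].
Qed.

End BC.

Section Moves.
Variables (n : nat) (f : 'I_n -> {set 'I_n}) (s t : 'S_n) (a b : 'I_n).
Hypothesis hab : (b : nat) = a.+1.
Hypothesis ta : t a = s b.
Hypothesis tb : t b = s a.
Hypothesis tx : forall x, x != a -> x != b -> t x = s x.

Lemma ab_neq : a != b.
Proof. by apply/eqP => /(congr1 val) /=; lia. Qed.

Lemma goodf_merge : goodf f s -> s a = a ->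
  goodf (fun x => if x \in a |: f b then a |: f b else f x) t.
Proof.
case=> fx fy fnc fbc sa.
have fa : f a = [set a].
  apply/setP => z; rewrite inE; apply/idP/eqP => [zA|->]; last exact: fx.
  have := fbc a; rewrite sa => /bcE [_ [[_ [aa _]] | [H1 H2]]]; first by rewrite ltnn in aa.
  by apply: val_inj => /=; have := H1 z zA; have := H2 z zA; lia.
set B := f b.
have aB : a \notin B.
  apply/negP => aB; have := fy _ _ aB; rewrite fa => e.
  by have := fx b; rewrite -e inE => /eqP/(congr1 val) /=; lia.
have bB : b \in B := fx b.
have fya y : a \in f y -> y = a.
  by move=> H; have := fx y; rewrite -(fy _ _ H) fa inE => /eqP.
have fyb y : b \in f y -> y \in B.
  by move=> H; have := fx y; rewrite -(fy _ _ H).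
have outB y : y \notin a |: B -> (a \notin f y) /\ (b \notin f y).
  move=> yB; split; apply/negP.
    by move/fya => e; move: yB; rewrite e setU11.
  by move/fyb => e; move: yB; rewrite in_setU1 e orbT.
split.
- by move=> x; case: ifP => [->|_].
- move=> x y; case: ifP => xB'.
    by move=> yB'; rewrite yB'.
  move=> yx.
  have yB' : y \notin a |: B.
    rewrite in_setU1; apply/negP => /orP[/eqP ya|yB].
      by move: yx; rewrite ya => /fya e; move: xB'; rewrite e setU11.
    by have := fx x; rewrite -(fy _ _ yx) /B (fy _ _ yB) => xB; rewrite in_setU1 xB orbT in xB'.
  by rewrite (negbTE yB') (fy _ _ yx).
- move=> x y; case: ifP => xB'; case: ifP => yB'.
  + by rewrite eqxx.
  + move=> _ H; have [ay bY] := outB y (negbT yB').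
    have := cross_merge_l hab bB ay bY H.
    apply: fnc; apply/eqP => e; move: yB'; rewrite in_setU1.
    by have := fx y; rewrite -e => ->; rewrite orbT.
  + move=> _ H; have [ax bX] := outB x (negbT xB').
    have := cross_merge_r hab bB ax bX H.
    apply: fnc; apply/eqP => e; move: xB'; rewrite in_setU1.
    by have := fx x; rewrite e => ->; rewrite orbT.
  + exact: fnc.
- move=> x; case: ifP => xB'.
    case/setU1P: xB' => [->|xB].
      by rewrite ta; apply: (bc_merge_a hab) => //; apply: fbc.
    case: (x =P b) => [->|/eqP xnb].
      by rewrite tb sa; apply: (bc_merge_b _ hab).
    have xa : x != a by apply: contraNneq aB => <-.
    rewrite tx //; apply: (bc_add_a hab) => //.
    by rewrite /B -(fy _ _ xB); apply: fbc.
  have xa : x != a by apply: contraNneq (negbT xB') => ->; rewrite setU11.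
  have xb : x != b by apply: contraNneq (negbT xB') => ->; rewrite in_setU1 bB orbT.
  by rewrite tx //; apply: fbc.
Qed.

Lemma goodf_split : goodf f s -> s b = a ->
  goodf (fun x => if x == a then [set a] else if x \in f b then f b :\ a else f x) t.
Proof.
case=> fx fy fnc fbc sb.
set B := f b.
have aB : a \in B by have := fbc b; rewrite sb => /bcE[].
have fa : f a = B := fy _ _ aB.
have bB : b \in B := fx b.
have ba : b != a by rewrite eq_sym ab_neq.
have sa : s a != a by apply/eqP => e; move: ab_neq; rewrite (perm_inj (etrans e (esym sb))) eqxx.
split.
- move=> x; case: eqP => [->|/eqP xa]; first by rewrite inE.
  by case: ifP => xB //; rewrite !inE xa.
- move=> x y; have [_|xa] := eqVneq x a.
    by move/set1P => ->; rewrite eqxx.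
  case: ifP => xB.
    by rewrite !inE => /andP[ya yB]; rewrite (negbTE ya) yB.
  move=> yx.
  have ya : y != a.
    by apply: contraNneq (negbT xB) => e; move: yx; rewrite e => /fy; rewrite fa => ->; apply: fx.
  have yB : y \notin B.
    by apply: contraNN (negbT xB) => yB; have := fx x; rewrite -(fy _ _ yx) /B (fy _ _ yB).
  by rewrite (negbTE ya) (negbTE yB) (fy _ _ yx).
- have sub x : (if x == a then [set a] else if x \in B then B :\ a else f x) \subset f x.
    case: eqP => [->|_]; first by rewrite sub1set; apply: fx.
    case: ifP => xB //.
    by rewrite (fy _ _ xB); apply: subD1set.
  move=> x y ne H.
  case: (f x =P f y) => [e|/eqP ne']; last first.
    by apply: (fnc _ _ ne'); apply: cross_sub H (sub x) (sub y).
  move: ne H; have [_ _|xa] := eqVneq x a; first by apply: cross1l.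
  have [_ _|ya] := eqVneq y a; first by apply: cross1r.
  have xy : (x \in B) = (y \in B).
    apply/idP/idP => H.
      by have := fx y; rewrite -e /B (fy _ _ H).
    by have := fx x; rewrite e /B (fy _ _ H).
  by rewrite xy; case: ifP => _; rewrite ?e eqxx.
- move=> x; have [->|xa] := eqVneq x a.
    rewrite ta sb; apply/bcE; split; first by rewrite inE.
    by right; split=> z /set1P ->.
  case: ifP => xB; last first.
    have xb : x != b by apply: contraNneq (negbT xB) => ->.
    by rewrite tx //; apply: fbc.
  case: (x =P b) => [->|/eqP xb].
    by rewrite tb; apply: (bc_split_b hab) => //; rewrite -fa; apply: fbc.
  rewrite tx //; apply: (bc_remove hab) => //.
    by apply: contraNneq xb => e; rewrite (perm_inj (etrans e (esym sb))).
  by rewrite /B -(fy _ _ xB); apply: fbc.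
Qed.

End Moves.

Lemma cs_a n (s : 'S_n) i (Hi : i.+1 < n) :
  comp_swap s Hi (Ordinal (ltnW Hi)) = s (Ordinal Hi).
Proof. by rewrite /comp_swap /adj_swap permM tpermL. Qed.

Lemma cs_b n (s : 'S_n) i (Hi : i.+1 < n) :
  comp_swap s Hi (Ordinal Hi) = s (Ordinal (ltnW Hi)).
Proof. by rewrite /comp_swap /adj_swap permM tpermR. Qed.

Lemma cs_x n (s : 'S_n) i (Hi : i.+1 < n) x :
  x != Ordinal (ltnW Hi) -> x != Ordinal Hi -> comp_swap s Hi x = s x.
Proof.
by move=> xa xb; rewrite /comp_swap /adj_swap permM tpermD // eq_sym.
Qed.

Lemma step_NC n (s t : 'S_n) : nc_step s t -> NC s -> NC t.
Proof.
case=> i [Hi [cond ->]] /NC_goodf [f gf]; apply/NC_goodf.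
have hab : (Ordinal Hi : nat) = (Ordinal (ltnW Hi) : nat).+1 by [].
case: cond => e.
  eexists; apply: (goodf_merge hab (cs_a s Hi) (cs_b s Hi) (@cs_x n s i Hi) gf).
  by rewrite -e.
eexists; apply: (goodf_split hab (cs_a s Hi) (cs_b s Hi) (@cs_x n s i Hi) gf).
by rewrite -e.
Qed.

Lemma step_sym n (s t : 'S_n) : nc_step s t -> nc_step t s.
Proof.
case=> i [Hi [cond ->]]; exists i, Hi; split.
  by rewrite cs_a cs_b; case: cond; [right|left].
by rewrite /comp_swap /adj_swap tpermKg.
Qed.

Lemma equiv_NC n (x y : 'S_n) : nc_equiv x y -> (NC x <-> NC y).
Proof.
elim=> {x y} [x y st | x | x y _ IH | x y z _ IH1 _ IH2].
- split; first exact: step_NC.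
  by apply: step_NC; apply: step_sym.
- by [].
- by tauto.
- by tauto.
Qed.

Lemma NC1 n : NC (1 : 'S_n).
Proof.
apply/NC_goodf; exists (fun x => [set x]); split.
- by move=> x; rewrite inE.
- by move=> x y /set1P ->.
- by move=> x y _; apply: cross1l.
- move=> x; rewrite perm1; apply/bcE; split; first by rewrite inE.
  by right; split=> z /set1P ->.
Qed.

Definition h (x y : nat) := 3 * ((x - y) + (y - x)) + (if x == y then 1 else 0).

Lemma h_eq x : h x x = 1.
Proof. by rewrite /h eqxx subnn. Qed.

Lemma h_ne x y : x != y -> h x y = 3 * ((x - y) + (y - x)).
Proof. by move=> /negbTE ne; rewrite /h ne addn0. Qed.

Lemma h_le x y : h x y <= 3 * ((x - y) + (y - x)) + 1.
Proof. rewrite /h; case: (x == y); lia. Qed.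

Definition M n (s : 'S_n) := \sum_(x : 'I_n) h x (s x).

Lemma sum2 n (g : 'I_n -> nat) (a b : 'I_n) : a != b ->
  \sum_(x : 'I_n) g x = g a + g b + \sum_(x : 'I_n | (x != a) && (x != b)) g x.
Proof.
move=> ab; rewrite (bigD1 a) //= (bigD1 b) 1?eq_sym //= addnA.
by apply: congr1; apply: eq_bigl => x; rewrite andbC.
Qed.

Lemma M_swap n (s t : 'S_n) (a b : 'I_n) : a != b -> t a = s b -> t b = s a ->
  (forall x, x != a -> x != b -> t x = s x) ->
  M t + h a (s a) + h b (s b) = M s + h a (s b) + h b (s a).
Proof.
move=> ab ta tb tx; rewrite /M (sum2 _ ab) (sum2 (fun x : 'I_n => h x (s x)) ab) ta tb.
have -> : \sum_(x : 'I_n | (x != a) && (x != b)) h x (t x) =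
          \sum_(x : 'I_n | (x != a) && (x != b)) h x (s x).
  by apply: eq_bigr => x /andP[xa xb]; rewrite tx.
lia.
Qed.

Lemma main_B n m : forall (s : 'S_n), M s < m -> NC s -> nc_equiv 1%g s.
Proof.
elim: m => [|m IH] s //= Hm ncs.
have [f [fx fy fnc fbc]] := proj1 (NC_goodf s) ncs.
have back t : nc_step s t -> M t < m -> nc_equiv 1%g s.
  move=> st Mt; apply: (rst_trans _ _ _ t); first exact: IH Mt (step_NC st ncs).
  by apply: rst_sym; apply: rst_step.
case: (pickP (fun j : 'I_n => s j < j)) => [j0 Hj0 | none]; last first.
  have -> : s = 1%g.
    apply/permP => x; rewrite perm1; apply: val_inj => /=.
    have := none x => /= /negbT; rewrite -leqNgt => xs.
    apply/eqP; rewrite eqn_leq xs andbT leqNgt; apply/negP => xlt.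
    have sxin : s x \in f x by have := fbc x => /bcE[].
    have := fbc (s x); rewrite (fy _ _ sxin) => /bcE [_ [[_ [lt _]] | [H1 _]]].
      by have := none (s x); rewrite /= lt.
    by have := H1 x (fx x); lia.
  exact: rst_refl.
case: (@arg_minnP _ j0 (fun j : 'I_n => s j < j) (fun j : 'I_n => nat_of_ord j) Hj0) => j /= sj jmin.
have minj (z : 'I_n) : z < j -> z <= s z.
  by move=> zj; rewrite leqNgt; apply/negP => /jmin; lia.
set k := s j.
have kj : (k : nat) < j := sj.
have kfj : k \in f j by have := fbc j => /bcE[].
have jn : j < n := ltn_ord j.
have [ekj|nkj] := eqVneq (k : nat).+1 j.
  have Hi : (k : nat).+1 < n by rewrite ekj.
  set a := Ordinal (ltnW Hi); set b := Ordinal Hi.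
  have bE : b = j by apply: val_inj => /=.
  have aE : a = k by apply: val_inj.
  have ab : a != b by apply/eqP => /(congr1 val) /=; lia.
  have st : nc_step s (comp_swap s Hi).
    by exists k, Hi; split=> //; right; rewrite -/a -/b bE aE.
  apply: (back _ st).
  have := M_swap ab (cs_a s Hi) (cs_b s Hi) (@cs_x n s k Hi).
  have sab : s b = a by rewrite bE aE.
  have saa : (a : nat) <= s a by apply: minj; rewrite /=; lia.
  have sana : (s a : nat) != a.
    apply/eqP => e; have : s a = s b by rewrite sab; apply: val_inj.
    by move/perm_inj/eqP; rewrite (negbTE ab).
  rewrite sab h_eq h_ne; last by rewrite eq_sym.
  rewrite h_ne; last by rewrite eq_sym.
  move: saa sana Hm (h_le b (s a)); rewrite /=; lia.
have jpos : 0 < (j : nat) by lia.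
have Hi : (j : nat).-1.+1 < n by rewrite prednK.
set a := Ordinal (ltnW Hi); set b := Ordinal Hi.
have bE : b = j by apply: val_inj => /=; rewrite prednK.
have av : (a : nat) = j.-1 by [].
have ab : a != b by apply/eqP => /(congr1 val) /=; lia.
have mina : (a : nat) <= s a by apply: minj; rewrite av; lia.
have [sa|sa] := eqVneq (s a) a.
  have st : nc_step s (comp_swap s Hi).
    by exists j.-1, Hi; split=> //; left; rewrite -/a sa.
  apply: (back _ st).
  have := M_swap ab (cs_a s Hi) (cs_b s Hi) (@cs_x n s j.-1 Hi).
  rewrite sa bE h_eq -/k.
  have e1 : h j k = 3 * ((j - k) + (k - j)) by apply: h_ne; lia.
  have e2 : h a k = 3 * ((a - k) + (k - a)) by apply: h_ne; rewrite av; lia.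
  have e3 : h j a = 3 * ((j - a) + (a - j)) by apply: h_ne; rewrite av; lia.
  rewrite e1 e2 e3 av; lia.
exfalso.
have afj : a \notin f j.
  apply/negP => afj.
  have := fbc j => /bcE [_ [[_ [_ Hk]] | [_ H2]]].
    by have := Hk a afj; rewrite av; move: kj nkj jpos; rewrite /k; lia.
  by have := H2 j (fx j); move: kj; rewrite /k; lia.
have ne : f j != f a by apply: contraNneq afj => ->; apply: fx.
have safa : s a \in f a by have := fbc a => /bcE[].
have saj : (s a : nat) != j.
  apply/eqP => e; have e' : s a = j by apply: val_inj.
  move: safa; rewrite e' => /fy e2; move: ne; rewrite e2 eqxx //.
have sa' : (s a : nat) != a by apply: ord_neq.
apply: (fnc _ _ ne); exists k, j, a, (s a); split=> //.
have := av; move: kj nkj mina sa' saj jpos; clear; move=> *; apply/andP; split; first (apply/andP; split); lia.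
Qed.

Unset Implicit Arguments.

Theorem corollary7p9 (n : nat) (sigma : 'S_n) :
  nc_equiv 1%g sigma <-> NC sigma.
Proof.
split.
  by move=> H; apply/(equiv_NC H); apply: NC1.
by move=> ncs; apply: (@main_B n (M sigma).+1).
Qed.
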